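(* Let $\mathcal{H}$ be a real Hilbert space of dimension $d$, $G>0$, $\mathcal{G}=\{g\in\mathcal{H}:\|g\|\le G\}$, $\theta\in\mathcal{H}$ fixed, and $h:\mathbb{R}\to\mathbb{R}$ an even convex function that is increasing on $[0,\infty)$. Consider the one-round game \[ H=\min_{w\in\mathcal{H}}\max_{g\in\mathcal{G}}\ \langle w,g\rangle+h(\|\theta-g\|). \] If $d=1$, or if $d>1$, $h$ is twice differentiable, and $h''(x)>h'(x)/x$ for all $x>0$, then \[ H=\frac{h(\|\theta\|+G)+h(\|\theta\|-G)}{2}\qquad\text{and}\qquad w^*=\hat\theta\,\frac{h(\|\theta\|+G)-h(\|\theta\|-G)}{2G}, \] and any $g^*$ with $|\langle\theta,g^*\rangle|=G\|\theta\|$ and $\|g^*\|=G$ is a minimax play for the adversary.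
   Context: Write $H(w,g)=\langle w,g\rangle+h(\|\theta-g\|)$. $w^*=\arg\min_w\max_{g\in\mathcal{G}}H(w,g)$ is the minimax play of the player, and a minimax play of the adversary is a $g^*\in\arg\max_{g\in\mathcal{G}}H(w^*,g)$. $\hat\theta=\theta/\|\theta\|$ if $\theta\ne0$ and $\hat\theta=0$ otherwise. *)

(* Defs.v *)
(* R : realType, finite-dimensional real Hilbert space R^d = 'rV[R]_d *)
From HB Require Import structures.
From mathcomp Require Import all_boot all_order all_algebra.
From mathcomp Require Import all_classical all_reals all_analysis.
Set Implicit Arguments. Unset Strict Implicit. Unset Printing Implicit Defensive.
Import Order.TTheory GRing.Theory Num.Theory.
Local Open Scope ring_scope.

Definition dotv {R : realType} {d : nat} (u v : 'rV[R]_d) : R :=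
  \sum_(i < d) u ord0 i * v ord0 i.

Definition enorm {R : realType} {d : nat} (u : 'rV[R]_d) : R :=
  Num.sqrt (dotv u u).

Definition unit_dir {R : realType} {d : nat} (t : 'rV[R]_d) : 'rV[R]_d :=
  if t == 0 then 0 else (enorm t)^-1 *: t.

Definition game {R : realType} {d : nat} (h : R -> R) (theta w g : 'rV[R]_d) : R :=
  dotv w g + h (enorm (theta - g)).

Definition even_fun {R : realType} (h : R -> R) : Prop := forall x, h (- x) = h x.

Definition convex_fun {R : realType} (h : R -> R) : Prop :=
  forall x y t : R, 0 <= t -> t <= 1 ->
    h (t * x + (1 - t) * y) <= t * h x + (1 - t) * h y.

Definition increasing_on_nonneg {R : realType} (h : R -> R) : Prop :=
  forall x y : R, 0 <= x -> x < y -> h x < h y.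

(* Main.v *)
Require Import Defs.
From HB Require Import structures.
From mathcomp Require Import all_boot all_order all_algebra.
From mathcomp Require Import all_classical all_reals all_analysis.
Import Order.TTheory GRing.Theory Num.Theory.
Local Open Scope ring_scope.
From mathcomp Require Import ring lra.
Section Calc.
Variable R : realType.

Lemma m_incr (h : R -> R) :
  (forall x : R, derivable h x 1) ->
  (forall x : R, derivable (derive1 h) x 1) ->
  (forall x : R, 0 < x -> derive1 h x / x < derive1 (derive1 h) x) ->
  forall p q : R, 0 < p -> p < q -> derive1 h p / p < derive1 h q / q.
Proof.
move=> dh ddh cond p q p0 pq.
pose m := fun x : R => derive1 h x * x^-1.
pose dm := fun x : R => derive1 h x * (- x ^- 2) + x^-1 * derive1 (derive1 h) x.
have Dm : forall x : R, 0 < x -> is_derive x 1 m (dm x).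
  move=> x x0.
  have D1 : is_derive x 1 (derive1 h) (derive1 (derive1 h) x).
    by rewrite derive1E; apply: derivableP.
  have D2 : is_derive x (1:R) (fun y : R => y^-1) (- (x) ^- 2 *: (1:R)).
    apply: (@is_deriveV _ id); first by rewrite gt_eqF.
  have D3 := is_deriveM D1 D2.
  apply: is_derive_eq.
  by rewrite /dm -[- x ^- 2 in RHS]mulr1.
have [c cpq E] : exists2 c, c \in `]p, q[ & m q - m p = dm c * (q - p).
  apply: MVT => //.
    move=> x; rewrite in_itv /= => /andP[px _]; apply: Dm; exact: lt_trans p0 px.
  apply: derivable_within_continuous => x; rewrite in_itv /= => /andP[px _].
  by case: (Dm x (lt_le_trans p0 px)).
move: cpq; rewrite in_itv /= => /andP[pc cq].
have c0 : 0 < c by exact: lt_trans p0 pc.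
have dmc : 0 < dm c.
  have := cond c c0.
  have -> : dm c = c^-1 * (derive1 (derive1 h) c - derive1 h c / c).
    rewrite /dm; field; by rewrite gt_eqF.
  by move=> H; apply: mulr_gt0; rewrite ?invr_gt0 ?subr_gt0.
have : 0 < m q - m p by rewrite E; apply: mulr_gt0; rewrite // subr_gt0.
by rewrite subr_gt0.
Qed.

Lemma chord_le (f df : R -> R) (x1 x2 : R) : x1 < x2 ->
  (forall x : R, is_derive x (1:R) f (df x)) -> f x1 = 0 -> f x2 = 0 ->
  (forall p q, x1 < p -> p < q -> q < x2 -> 0 < df p -> df q < 0 -> False) ->
  forall x, x1 <= x -> x <= x2 -> f x <= 0.
Proof.
move=> x12 Df f1 f2 H x h1 h2.
rewrite leNgt; apply/negP => fx.
have dv : forall y : R, derivable f y 1 by move=> y; case: (Df y).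
have x1x : x1 < x.
  rewrite lt_neqAle h1 andbT; apply/eqP => E; move: fx; by rewrite -E f1 ltxx.
have xx2 : x < x2.
  rewrite lt_neqAle h2 andbT; apply/eqP => E; move: fx; by rewrite E f2 ltxx.
have [c1 c1i E1] := MVT x1x (fun y _ => Df y) (derivable_within_continuous (fun y _ => dv y)).
have [c2 c2i E2] := MVT xx2 (fun y _ => Df y) (derivable_within_continuous (fun y _ => dv y)).
move: c1i c2i; rewrite !in_itv /= => /andP[a1 a2] /andP[b1 b2].
apply: (H c1 c2) => //.
- exact: lt_trans a2 b1.
- have : 0 < df c1 * (x - x1) by rewrite -E1 f1 subr0.
  by rewrite pmulr_lgt0 // subr_gt0.
- have : df c2 * (x2 - x) < 0 by rewrite -E2 f2 sub0r oppr_lt0.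
  by rewrite pmulr_llt0 // subr_gt0.
Qed.


Lemma psi_deriv (h : R -> R) (k C : R) : (forall x : R, derivable h x 1) ->
  forall y : R, is_derive y (1:R) (h + cst C - k *: ((id : R -> R) * id))
     ('D_1 h y - k * (y + y)).
Proof.
move=> dh y.
have Dh := derivableP (dh y).
apply: is_derive_eq.
rewrite addr0; congr (_ - _); congr (_ * _); by rewrite /GRing.scale /= !mulr1.
Qed.


Lemma h_abs (h : R -> R) : even_fun h -> forall x, h `|x| = h x.
Proof.
move=> hev x; have [x0|x0] := lerP 0 x; first by rewrite ger0_norm.
by rewrite ltr0_norm // hev.
Qed.

Lemma sphere_bound (h : R -> R) (t G : R) : 0 < t -> 0 < G -> even_fun h ->
  (forall x : R, derivable h x 1) ->
  (forall x : R, derivable (derive1 h) x 1) ->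
  (forall x : R, 0 < x -> derive1 h x / x < derive1 (derive1 h) x) ->
  forall a, - G <= a -> a <= G ->
  (h (t + G) - h (t - G)) / (2 * G) * a + h (Num.sqrt (t ^+ 2 - 2 * t * a + G ^+ 2))
    <= (h (t + G) + h (t - G)) / 2.
Proof.
move=> t0 G0 hev dh ddh cond a aG1 aG2.
set c := (h (t + G) - h (t - G)) / (2 * G).
set val := (h (t + G) + h (t - G)) / 2.
set s := t ^+ 2 - 2 * t * a + G ^+ 2.
have s1 : (t - G) ^+ 2 <= s by rewrite /s; nra.
have s2 : s <= (t + G) ^+ 2 by rewrite /s; nra.
pose k := c / (2 * t).
pose C := k * (t ^+ 2 + G ^+ 2) - val.
pose psi := h + cst C - k *: ((id : R -> R) * id).
have psiE y : psi y = h y + C - k * (y * y) by [].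
have key : psi (Num.sqrt s) <= 0.
  apply: (@chord_le psi (fun y => 'D_1 h y - k * (y + y)) `|t - G| (t + G)).
  - rewrite ltr_norml; apply/andP; split; lra.
  - exact: psi_deriv.
  - rewrite psiE h_abs // -expr2 real_normK ?num_real // /C /k /val /c.
    field; lra.
  - rewrite psiE /C /k /val /c -expr2.
    field; lra.
  - move=> p q p1 pq q2 dp dq.
    have p0 : 0 < p by apply: le_lt_trans p1.
    have q0 : 0 < q by apply: lt_trans pq.
    have := @m_incr h dh ddh cond p q p0 pq.
    rewrite !derive1E => mi.
    have e1 : k * 2 < 'D_1 h p / p.
      rewrite ltr_pdivlMr //; lra.
    have e2 : k * 2 * q < 'D_1 h q.
      rewrite -ltr_pdivlMr //; lra.
    lra.
  - by rewrite -(sqrtr_sqr (t - G)) ler_wsqrtr.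
  - by rewrite -(ger0_norm (ltW (addr_gt0 t0 G0))) -sqrtr_sqr ler_wsqrtr.
move: key; rewrite psiE -expr2 sqr_sqrtr; last by apply: le_trans s1; exact: sqr_ge0.
rewrite /C /k /s => H.
have E : c / (2 * t) * (t ^+ 2 + G ^+ 2) - val - c / (2 * t) * (t ^+ 2 - 2 * t * a + G ^+ 2)
   = c * a - val by field; lra.
lra.
Qed.

End Calc.
Set Implicit Arguments. Unset Strict Implicit.
Section Vec.
Variables (R : realType) (d : nat).
Implicit Types u v w : 'rV[R]_d.

Lemma dotvC u v : dotv u v = dotv v u.
Proof. by apply: eq_bigr => i _; rewrite mulrC. Qed.

Lemma dotvDl u v w : dotv (u + v) w = dotv u w + dotv v w.
Proof. by rewrite /dotv -big_split; apply: eq_bigr => i _; rewrite mxE mulrDl. Qed.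

Lemma dotvZl (k : R) u w : dotv (k *: u) w = k * dotv u w.
Proof. by rewrite /dotv mulr_sumr; apply: eq_bigr => i _; rewrite mxE mulrA. Qed.

Lemma dotvNl u w : dotv (- u) w = - dotv u w.
Proof. by rewrite -scaleN1r dotvZl mulN1r. Qed.

Lemma dotvDr u v w : dotv w (u + v) = dotv w u + dotv w v.
Proof. by rewrite dotvC dotvDl !(dotvC w). Qed.

Lemma dotvZr (k : R) u w : dotv w (k *: u) = k * dotv w u.
Proof. by rewrite dotvC dotvZl dotvC. Qed.

Lemma dotvNr u w : dotv w (- u) = - dotv w u.
Proof. by rewrite dotvC dotvNl dotvC. Qed.

Lemma dotv0l w : dotv 0 w = 0.
Proof. by rewrite -(scale0r 0) dotvZl mul0r. Qed.

Lemma dotv0r w : dotv w 0 = 0.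
Proof. by rewrite dotvC dotv0l. Qed.

Lemma dotvv_ge0 v : 0 <= dotv v v.
Proof. by apply: sumr_ge0 => i _; rewrite -expr2 sqr_ge0. Qed.

Lemma dotvv_eq0 v : dotv v v = 0 -> v = 0.
Proof.
move=> /eqP; rewrite psumr_eq0; last by move=> i _; rewrite -expr2 sqr_ge0.
move=> /allP H; apply/matrixP => i j; rewrite mxE (ord1 i).
have := H j (mem_index_enum j); rewrite /= mulf_eq0 orbb.
by move/eqP.
Qed.

Lemma enorm_ge0 v : 0 <= enorm v.
Proof. exact: sqrtr_ge0. Qed.

Lemma enorm_sq v : enorm v ^+ 2 = dotv v v.
Proof. by rewrite sqr_sqrtr // dotvv_ge0. Qed.

Lemma enorm_eq v x : 0 <= x -> dotv v v = x ^+ 2 -> enorm v = x.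
Proof. by move=> x0 E; rewrite /enorm E sqrtr_sqr ger0_norm. Qed.

Lemma enorm0 : enorm (0 : 'rV[R]_d) = 0.
Proof. by apply: enorm_eq => //; rewrite dotv0l expr0n. Qed.

Lemma enorm_eq0 v : enorm v = 0 -> v = 0.
Proof. by move=> E; apply: dotvv_eq0; rewrite -enorm_sq E expr0n. Qed.

End Vec.

Lemma dotv_d1 (R : realType) (x y : 'rV[R]_1) : dotv x x = 1 -> dotv y y = (dotv x y) ^+ 2.
Proof.
rewrite /dotv !big_ord1 => H.
by rewrite exprMn [_ ^+ 2]expr2 H mul1r expr2.
Qed.

Lemma unit_vec (R : realType) (d : nat) : (0 < d)%N -> exists e : 'rV[R]_d, dotv e e = 1.
Proof.
move=> d0; exists (delta_mx 0 (Ordinal d0)).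
rewrite /dotv (bigD1 (Ordinal d0)) //= big1 => [|i ni]; first by rewrite !mxE !eqxx mulr1 addr0.
by rewrite !mxE (negbTE ni) andbF mul0r.
Qed.

Lemma sqr_gt_lt (R : realType) (X Y : R) : 0 <= X -> Y ^+ 2 < X ^+ 2 -> Y < X.
Proof. move=> X0 H; nra. Qed.

Lemma sqr_le_bound (R : realType) (a G : R) : 0 <= G -> a ^+ 2 <= G ^+ 2 -> - G <= a /\ a <= G.
Proof.
move=> G0 H; split; rewrite leNgt; apply/negP => H'.
  have : G ^+ 2 < a ^+ 2.
    rewrite -[a ^+ 2]sqrrN ltr_sqr ?nnegrE; lra.
  lra.
have : G ^+ 2 < a ^+ 2.
  rewrite ltr_sqr ?nnegrE; lra.
lra.
Qed.
Unset Implicit Arguments. Set Strict Implicit.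
Section Main.
Variables (R : realType) (d : nat) (G : R) (theta : 'rV[R]_d) (h : R -> R).
Hypotheses (hG : 0 < G) (heven : even_fun h) (hconv : convex_fun h)
  (hinc : increasing_on_nonneg h)
  (hd : d = 1%N \/
        [/\ (1 < d)%N,
            (forall x : R, derivable h x 1),
            (forall x : R, derivable (derive1 h) x 1) &
            (forall x : R, 0 < x -> derive1 h x / x < derive1 (derive1 h) x)]).

Lemma hmono x y : 0 <= x -> x <= y -> h x <= h y.
Proof.
move=> x0; rewrite le_eqVlt => /orP[/eqP -> //|xy].
exact/ltW/hinc.
Qed.

Lemma hlip x y : 0 <= x -> 0 <= y -> h x - (h (x + 1) - h x) * `|x - y| <= h y.
Proof.
move=> x0 y0.
have L0 : 0 <= h (x + 1) - h x by rewrite subr_ge0; apply: hmono => //; lra.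
have [yx|xy] := lerP y x; last first.
  have H1 : h x <= h y by apply: hmono => //; exact: ltW.
  apply: le_trans H1; rewrite gerDl oppr_le0; apply: mulr_ge0 => //.
  by rewrite subr_ge0 ltW.
set D := x - y.
have D0 : 0 <= D by rewrite /D subr_ge0.
pose l := (D + 1)^-1.
have l0 : 0 <= l by rewrite /l invr_ge0; lra.
have l1 : l <= 1 by rewrite /l invf_le1; lra.
have := @hconv y (x + 1) l l0 l1.
have -> : l * y + (1 - l) * (x + 1) = x.
  rewrite /l /D; field; lra.
move=> H.
have H2 : (D + 1) * h x <= h y + D * h (x + 1).
  have E : (D + 1) * (l * h y + (1 - l) * h (x + 1)) = h y + D * h (x + 1).
    rewrite /l; field; lra.
  rewrite -E; apply: ler_wpM2l => //; lra.
nra.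
Qed.

Let t := enorm theta.
Let u := unit_dir theta.
Let c := (h (t + G) - h (t - G)) / (2 * G).
Let val := (h (t + G) + h (t - G)) / 2.
Let ws := c *: u.

Lemma val_endP : c * G + h (t - G) = val.
Proof. rewrite /c /val; field; by rewrite gt_eqF. Qed.

Lemma val_endN : - (c * G) + h (t + G) = val.
Proof. rewrite /c /val; field; by rewrite gt_eqF. Qed.

Section Nonzero.
Hypothesis thn0 : theta != 0.

Lemma t_gt0 : 0 < t.
Proof.
rewrite lt_neqAle enorm_ge0 andbT; apply/eqP => E.
by move: thn0; rewrite (enorm_eq0 (esym E)) eqxx.
Qed.

Lemma uE : u = t^-1 *: theta.
Proof. by rewrite /u /unit_dir (negbTE thn0). Qed.

Lemma thetaE : theta = t *: u.
Proof. by rewrite uE scalerA mulfV ?scale1r // gt_eqF // t_gt0. Qed.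

Lemma uu : dotv u u = 1.
Proof.
rewrite uE dotvZl dotvZr -enorm_sq -/t mulrA -expr2 -exprMn mulVf ?expr1n //.
by rewrite gt_eqF // t_gt0.
Qed.

Lemma exp_sub g : dotv (theta - g) (theta - g) = t ^+ 2 - 2 * t * dotv u g + dotv g g.
Proof.
rewrite {1 2}thetaE !(dotvDl, dotvDr, dotvNl, dotvNr, dotvZl, dotvZr) uu (dotvC g u).
ring.
Qed.

Lemma a_bound g : dotv u g ^+ 2 <= dotv g g.
Proof.
have := dotvv_ge0 (g - dotv u g *: u).
rewrite !(dotvDl, dotvDr, dotvNl, dotvNr, dotvZl, dotvZr) uu (dotvC g u).
nra.
Qed.

Lemma game_on g : enorm g = G -> dotv u g = G \/ dotv u g = - G ->
  game h theta ws g = val.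
Proof.
move=> gG aG.
rewrite /game /ws dotvZl.
have t0 := t_gt0.
case: aG => aE.
  rewrite (@enorm_eq _ _ _ `|t - G|) ?normr_ge0 //; last first.
    by rewrite exp_sub -enorm_sq gG aE real_normK ?num_real //; ring.
  by rewrite h_abs // aE val_endP.
rewrite (@enorm_eq _ _ _ (t + G)).
- by rewrite aE mulrN val_endN.
- exact: ltW (addr_gt0 t0 hG).
- by rewrite exp_sub -enorm_sq gG aE; ring.
Qed.

Lemma claim1_nz g : enorm g <= G -> game h theta ws g <= val.
Proof.
move=> gG.
have hG2 := hG.
have t0 := t_gt0.
set a := dotv u g.
have r2G : dotv g g <= G ^+ 2.
  rewrite -enorm_sq; have := enorm_ge0 g; nra.
have aG2 : a ^+ 2 <= G ^+ 2 := le_trans (a_bound g) r2G.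
have [aG1 aG3] := sqr_le_bound (ltW hG) aG2.
rewrite /game /ws dotvZl -/a.
case: hd => [d1 | [_ dh ddh cond]].
  have D1 : forall x y : 'rV[R]_d, dotv x x = 1 -> dotv y y = (dotv x y) ^+ 2.
    by rewrite d1; exact: dotv_d1.
  have en : enorm (theta - g) = `|t - a|.
    apply: enorm_eq; first exact: normr_ge0.
    by rewrite exp_sub (D1 u g uu) -/a real_normK ?num_real //; ring.
  rewrite en h_abs //.
  pose l := (a + G) / (2 * G).
  have l0 : 0 <= l by rewrite /l divr_ge0 //; lra.
  have l1 : l <= 1.
    by rewrite /l ler_pdivrMr; lra.
  have Hc : h (t - a) <= l * h (t - G) + (1 - l) * h (t + G).
    have -> : t - a = l * (t - G) + (1 - l) * (t + G) by rewrite /l; field; lra.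
    exact: hconv.
  have E : c * a + (l * h (t - G) + (1 - l) * h (t + G)) = val.
    rewrite /c /l /val; field; lra.
  lra.
have en : enorm (theta - g) <= Num.sqrt (t ^+ 2 - 2 * t * a + G ^+ 2).
  rewrite /enorm exp_sub -/a ler_wsqrtr //; lra.
apply: le_trans (@sphere_bound R h t G t0 hG heven dh ddh cond a aG1 aG3).
rewrite lerD2l; apply: hmono => //; exact: enorm_ge0.
Qed.

Lemma claim4_nz gs : `|dotv theta gs| = G * t -> enorm gs = G ->
  forall g, enorm g <= G -> game h theta ws g <= game h theta ws gs.
Proof.
move=> H1 H2 g gG.
have t0 := t_gt0.
have aE : dotv u gs = G \/ dotv u gs = - G.
  move: H1; rewrite {1}thetaE dotvZl normrM (gtr0_norm t0) mulrC => /mulIf.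
  have /[swap]/[apply] : t != 0 by rewrite gt_eqF.
  move=> /eqP; rewrite eqr_norml => /andP[/orP[/eqP->|/eqP->] _]; by [left|right].
rewrite (@game_on gs H2 aE); exact: claim1_nz.
Qed.

Lemma claim3_nz w : w != ws -> exists2 g, enorm g <= G & val < game h theta w g.
Proof.
move=> wn.
have hG2 := hG.
have t0 := t_gt0.
set v := w - ws.
have gameE g : game h theta w g = game h theta ws g + dotv v g.
  by rewrite /game /v dotvDl dotvNl; ring.
set p := dotv v u.
have [p0|pn0] := eqVneq p 0; last first.
  set s := if 0 < p then G else - G.
  have s2 : s ^+ 2 = G ^+ 2 by rewrite /s; case: ifP => _ //; rewrite sqrrN.
  have sG : s = G \/ s = - G by rewrite /s; case: ifP => _; [left|right].
  have gG : enorm (s *: u) = G.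
    by apply: enorm_eq; [exact: ltW|rewrite dotvZl dotvZr uu mulr1 -expr2].
  exists (s *: u); first by rewrite gG.
  rewrite gameE game_on //; last by rewrite dotvZr uu mulr1.
  rewrite ltrDl dotvZr -/p /s; case: ifP => pp.
    exact: mulr_gt0.
  rewrite mulNr oppr_gt0 pmulr_rlt0 //.
  by rewrite lt_neqAle pn0 /= leNgt pp.
have vn0 : v != 0 by rewrite /v subr_eq0.
clearbody v.
set N := dotv v v.
have N0 : 0 < N.
  rewrite lt_neqAle dotvv_ge0 andbT; apply/eqP => E.
  by move: vn0; rewrite (dotvv_eq0 (esym E)) eqxx.
set nv := enorm v.
have nvN : nv ^+ 2 = N by rewrite enorm_sq.
have nv0 : 0 < nv by rewrite /nv /enorm sqrtr_gt0.
set vh := nv^-1 *: v.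
have uvh : dotv u vh = 0 by rewrite dotvZr dotvC -/p p0 mulr0.
have vhvh : dotv vh vh = 1.
  rewrite dotvZl dotvZr -/N -nvN; field; by rewrite gt_eqF.
have vvh : dotv v vh = nv.
  rewrite dotvZr -/N -nvN; field; by rewrite gt_eqF.
clearbody vh.
set x0 := `|t - G|.
set L := h (x0 + 1) - h x0.
have L0 : 0 <= L.
  rewrite subr_ge0; apply: hmono; first exact: normr_ge0. lra.
set K := c + L.
set e := G * N / (N + K ^+ 2).
have NK : 0 < N + K ^+ 2 by have := sqr_ge0 K; lra.
have e0 : 0 < e by rewrite /e divr_gt0 // mulr_gt0.
have eG : e <= G.
  rewrite /e ler_pdivrMr //; have := sqr_ge0 K; nra.
have eE : e * (N + K ^+ 2) = G * N by rewrite /e; field; rewrite gt_eqF.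
clearbody e.
set a := G - e.
set b := Num.sqrt (G ^+ 2 - a ^+ 2).
have b2 : b ^+ 2 = G ^+ 2 - a ^+ 2 by rewrite sqr_sqrtr // /a; nra.
have b0 : 0 <= b := sqrtr_ge0 _.
set g := a *: u + b *: vh.
have gg : dotv g g = G ^+ 2.
  rewrite /g !(dotvDl, dotvDr, dotvZl, dotvZr) uu vhvh uvh (dotvC vh u) uvh.
  transitivity (a ^+ 2 + b ^+ 2); first by ring.
  by rewrite b2; ring.
have ug : dotv u g = a.
  by rewrite /g !(dotvDl, dotvDr, dotvZl, dotvZr) uu uvh; ring.
have vg : dotv v g = b * nv.
  by rewrite /g !(dotvDl, dotvDr, dotvZl, dotvZr) vvh -/p p0; ring.
have gG : enorm g = G by apply: enorm_eq => //; exact: ltW.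
exists g; first by rewrite gG.
rewrite gameE /game /ws dotvZl ug vg.
have en : `|t - a| <= enorm (theta - g).
  rewrite -sqrtr_sqr /enorm ler_wsqrtr // exp_sub ug gg; nra.
have h1 : h `|t - a| <= h (enorm (theta - g)) by apply: hmono => //.
have h2 := hlip _ _ (normr_ge0 (t - G)) (normr_ge0 (t - a)).
have h3 : `|x0 - `|t - a| | <= e.
  apply: le_trans (ler_dist_dist _ _) _.
  have -> : t - G - (t - a) = - e by rewrite /a; ring.
  by rewrite normrN gtr0_norm.
have h4 : L * `|x0 - `|t - a| | <= L * e by apply: ler_wpM2l.
rewrite -/x0 -/L in h2.
have h5 : h x0 = h (t - G) by rewrite /x0 h_abs.
have h6 : K * e < b * nv.
  apply: (@sqr_gt_lt _ (b * nv)); first exact: mulr_ge0 b0 (ltW nv0).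
  rewrite !exprMn b2 nvN /a.
  have -> : G ^+ 2 - (G - e) ^+ 2 = e * (2 * G - e) by ring.
  have -> : e * (2 * G - e) * N = e * (2 * G * N - e * N) by ring.
  have : K ^+ 2 * e ^+ 2 = e * (e * (N + K ^+ 2) - e * N) by ring.
  rewrite eE => ->.
  rewrite ltr_pM2l //; nra.
have E2 := val_endP.
rewrite /K in h6; rewrite /a.
lra.
Qed.

End Nonzero.

Section Zero.
Hypothesis th0 : theta = 0.

Lemma t0 : t = 0. Proof. by rewrite /t th0 enorm0. Qed.
Lemma ws0 : ws = 0. Proof. by rewrite /ws /u /unit_dir th0 eqxx scaler0. Qed.
Lemma val0 : val = h G. Proof. by rewrite /val t0 add0r sub0r heven; field. Qed.
Lemma game0 w g : game h theta w g = dotv w g + h (enorm g).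
Proof.
rewrite /game th0 sub0r; congr (_ + h _).
by rewrite /enorm dotvNl dotvNr opprK.
Qed.

Lemma claim1_0 g : enorm g <= G -> game h theta ws g <= val.
Proof.
move=> gG; rewrite game0 ws0 dotv0l add0r val0.
apply: hmono => //; exact: enorm_ge0.
Qed.

Lemma claim3_0 w : w != ws -> exists2 g, enorm g <= G & val < game h theta w g.
Proof.
rewrite ws0 => wn.
have hG2 := hG.
set N := dotv w w.
have N0 : 0 < N.
  rewrite lt_neqAle dotvv_ge0 andbT; apply/eqP => E.
  by move: wn; rewrite (dotvv_eq0 (esym E)) eqxx.
set nw := enorm w.
have nwN : nw ^+ 2 = N by rewrite enorm_sq.
have nw0 : 0 < nw by rewrite /nw /enorm sqrtr_gt0.
have gG : enorm ((G / nw) *: w) = G.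
  apply: enorm_eq; first exact: ltW.
  rewrite dotvZl dotvZr -/N -nwN; field; by rewrite gt_eqF.
exists ((G / nw) *: w); first by rewrite gG.
rewrite game0 gG val0 ltrDr dotvZr -/N.
by apply: mulr_gt0 => //; apply: divr_gt0.
Qed.

Lemma claim4_0 gs : enorm gs = G ->
  forall g, enorm g <= G -> game h theta ws g <= game h theta ws gs.
Proof.
move=> H g gG; apply: (le_trans (claim1_0 g gG)).
by rewrite game0 ws0 dotv0l add0r H val0.
Qed.

End Zero.

Lemma d_pos : (0 < d)%N.
Proof. by case: hd => [->|[H _ _ _]] //; apply: ltn_trans H. Qed.

Lemma final :
  [/\ (forall g, enorm g <= G -> game h theta ws g <= val),
      (forall w, exists2 g, enorm g <= G & val <= game h theta w g),
      (forall w, w != ws -> exists2 g, enorm g <= G & val < game h theta w g) &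
      (forall gs, `|dotv theta gs| = G * enorm theta -> enorm gs = G ->
         forall g, enorm g <= G -> game h theta ws g <= game h theta ws gs)].
Proof.
have [th0|thn0] := eqVneq theta 0.
  have c3 := claim3_0 th0.
  split.
  - exact: claim1_0 th0.
  - move=> w; have [->|wn] := eqVneq w ws; last first.
      by have [g gG Hg] := c3 w wn; exists g => //; exact: ltW.
    have [e ee] := unit_vec R d_pos.
    have gG : enorm (G *: e) = G.
      by apply: enorm_eq; [exact: ltW|rewrite dotvZl dotvZr ee mulr1 -expr2].
    exists (G *: e); first by rewrite gG.
    by rewrite (game0 th0) (ws0 th0) dotv0l add0r gG (val0 th0).
  - exact: c3.
  - by move=> gs _ H; exact: claim4_0 th0 gs H.
have c3 := claim3_nz thn0.
split.
- exact: claim1_nz thn0.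
- move=> w; have [->|wn] := eqVneq w ws; last first.
    by have [g gG Hg] := c3 w wn; exists g => //; exact: ltW.
  have gG : enorm (G *: u) = G.
    by apply: enorm_eq; [exact: ltW|rewrite dotvZl dotvZr (uu thn0) mulr1 -expr2].
  exists (G *: u); first by rewrite gG.
  by rewrite (game_on thn0 _ gG) // dotvZr (uu thn0) mulr1; left.
- exact: c3.
- exact: claim4_nz thn0.
Qed.

End Main.
Theorem lemma8 (R : realType) (d : nat) (G : R) (theta : 'rV[R]_d) (h : R -> R)
  (hG : 0 < G) (heven : even_fun h) (hconv : convex_fun h)
  (hinc : increasing_on_nonneg h)
  (hd : d = 1%N \/
        [/\ (1 < d)%N,
            (forall x : R, derivable h x 1),
            (forall x : R, derivable (derive1 h) x 1) &
            (forall x : R, 0 < x -> derive1 h x / x < derive1 (derive1 h) x)]) :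
  let val := (h (enorm theta + G) + h (enorm theta - G)) / 2 in
  let wstar := ((h (enorm theta + G) - h (enorm theta - G)) / (2 * G)) *: unit_dir theta in
  [/\ (* max_g H(w*, g) <= val *)
      (forall g, enorm g <= G -> game h theta wstar g <= val),
      (* every w has max_g H(w, g) >= val, so val = min_w max_g H and w* attains it *)
      (forall w, exists2 g, enorm g <= G & val <= game h theta w g),
      (* w* is the unique minimizer *)
      (forall w, w != wstar -> exists2 g, enorm g <= G & val < game h theta w g) &
      (* any such g* is a maximizer of H(w*, .) over the ball *)
      (forall gs, `|dotv theta gs| = G * enorm theta -> enorm gs = G ->
         forall g, enorm g <= G -> game h theta wstar g <= game h theta wstar gs)].
Proof.
move=> val wstar.
exact: (@final R d G theta h hG heven hconv hinc hd).
Qed.
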